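(* Let $p$ be a prime, let $A$ be an integral domain with $\mathbb{Q}\subseteq A$ and let $F=\mathrm{Quot}\,A$. Then there is a one-to-one correspondence between valuation rings $B\subseteq F$ of $p$-valuations of $F$ and total $p$-divisibilities $|$ on $A$ that have cancellation and support $I(|)=\{0\}$, given by $B\mapsto |$ with $a|b\Leftrightarrow (a=b=0)$ or ($a\ne0$ and $b/a\in B$), and conversely $|\mapsto B=\{b/a;\ a,b\in A,\ a\ne0,\ a|b\}\cup\{0\}$.
   Context: A valuation $v:F\twoheadrightarrow\Gamma\cup\{\infty\}$ on a field of characteristic $0$ is a $p$-valuation if $\Gamma$ is a discretely ordered abelian group with $v(p)$ as minimal positive element and residue field $\mathbb{F}_p$. A divisibility on $A$ is a binary relation $|\subseteq A\times A$ such that for all $a,b,c$: (1) $a|a$; (2) $a|b,\ b|c\Rightarrow a|c$; (3) $a|b,\ a|c\Rightarrow a|b-c$; (4) $a|b\Rightarrow ac|bc$; (5) $0\nmid1$. A $p$-divisibility additionally satisfies for all $a,b$: (6) $0\nmid a\Rightarrow pa\nmid a$; (7) $p[(a^pb-b^pa)^2-(b^{p+1})^2]\ \big|\ (a^pb-b^pa)b^{p+1}$. Support $I(|)=\{a;\ 0|a\}$; total: $a|b$ or $b|a$ for all $a,b$; cancellation: $0\nmid c$ and $ac|bc$ imply $a|b$. *)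

(* Defs.v *)
From HB Require Import structures.
From mathcomp Require Import all_boot all_order all_algebra.
From mathcomp Require Import fraction.
Set Implicit Arguments. Unset Strict Implicit. Unset Printing Implicit Defensive.
Import GRing.Theory.
Local Open Scope ring_scope.

(* ---------- Value groups: Gamma \cup {oo} is modelled as option Gamma,
   with None = oo. Gamma is an abelian group (zmodType) with an explicit
   order relation [le]. ---------- *)

Section Valuations.
Variables (G : zmodType) (le : G -> G -> Prop).

Definition ordered_abelian_group : Prop :=
  [/\ (forall a, le a a),
      (forall a b, le a b -> le b a -> a = b),
      (forall a b c, le a b -> le b c -> le a c),
      (forall a b, le a b \/ le b a)
    & (forall a b c, le a b -> le (a + c) (b + c))].

Definition glt (a b : G) : Prop := le a b /\ a <> b.

Definition vle (x y : option G) : Prop :=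
  match x, y with
  | _, None => True
  | None, Some _ => False
  | Some a, Some b => le a b
  end.

Definition vlt (x y : option G) : Prop := vle x y /\ x <> y.

Definition vadd (x y : option G) : option G :=
  match x, y with
  | Some a, Some b => Some (a + b)
  | _, _ => None
  end.

Variable (F : fieldType).

Definition is_valuation (v : F -> option G) : Prop :=
  [/\ ordered_abelian_group,
      (forall x, v x = None <-> x = 0),
      (forall x y, v (x * y) = vadd (v x) (v y)),
      (forall x y, vle (v x) (v (x + y)) \/ vle (v y) (v (x + y)))
    & (forall g, exists x, v x = Some g)].

Definition val_ring (v : F -> option G) (x : F) : Prop := vle (Some 0) (v x).

(* v is a p-valuation: Gamma discretely ordered with v(p) as minimal positive
   element, and residue field F_p (i.e. every element of the valuation ring
   is congruent to an integer modulo the maximal ideal; since v(p) > 0 the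
   residue field has characteristic p, so this says exactly that the residue
   field is its prime field F_p). *)
Definition is_p_valuation (p : nat) (v : F -> option G) : Prop :=
  [/\ is_valuation v,
      (exists2 g0, v (p%:R) = Some g0 &
         glt 0 g0 /\ forall g, glt 0 g -> le g0 g)
    & (forall x, val_ring v x -> exists n : int, vlt (Some 0) (v (x - n%:~R)))].

End Valuations.

Definition is_p_val_ring (p : nat) (F : fieldType) (B : F -> Prop) : Prop :=
  exists (G : zmodType) (le : G -> G -> Prop) (v : F -> option G),
    is_p_valuation le p v /\ forall x, B x <-> val_ring le v x.

Section Divisibility.
Variables (A : comRingType) (dv : A -> A -> Prop).

Definition is_divisibility : Prop :=
  [/\ (forall a, dv a a),
      (forall a b c, dv a b -> dv b c -> dv a c),
      (forall a b c, dv a b -> dv a c -> dv a (b - c)),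
      (forall a b c, dv a b -> dv (a * c) (b * c))
    & ~ dv 0 1].

Definition is_p_divisibility (p : nat) : Prop :=
  [/\ is_divisibility,
      (forall a, ~ dv 0 a -> ~ dv (p%:R * a) a)
    & (forall a b,
        dv (p%:R * ((a ^+ p * b - b ^+ p * a) ^+ 2 - (b ^+ p.+1) ^+ 2))
           ((a ^+ p * b - b ^+ p * a) * b ^+ p.+1))].

(* support I(|) = {a ; 0 | a} *)
Definition support_is_zero : Prop := forall a, dv 0 a <-> a = 0.

Definition div_total : Prop := forall a b, dv a b \/ dv b a.

Definition div_cancellation : Prop :=
  forall a b c, ~ dv 0 c -> dv (a * c) (b * c) -> dv a b.

End Divisibility.

Definition good_p_div (p : nat) (A : comRingType) (dv : A -> A -> Prop) : Prop :=
  [/\ is_p_divisibility dv p, div_total dv, div_cancellation dv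
    & support_is_zero dv].

Section Maps.
Variable A : idomainType.
Local Notation F := {fraction A}.
Local Notation "x %:F" := (@FracField.tofrac A x).

Definition div_of_ring (B : F -> Prop) (a b : A) : Prop :=
  (a = 0 /\ b = 0) \/ (a <> 0 /\ B (b%:F / a%:F)).

Definition ring_of_div (dv : A -> A -> Prop) (x : F) : Prop :=
  (exists a b : A, [/\ a <> 0, dv a b & x = b%:F / a%:F]) \/ x = 0.

End Maps.

(* Main.v *)
Require Import Defs.
From HB Require Import structures.
From mathcomp Require Import all_boot all_order all_algebra all_field.
From mathcomp Require Import fraction ring zify.
From Stdlib Require Import Classical ClassicalEpsilon.
Set Implicit Arguments. Unset Strict Implicit. Unset Printing Implicit Defensive.
Import GRing.Theory.
Local Open Scope ring_scope.

Lemma frac_repr (A : idomainType) (x : {fraction A}) :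
  exists a b : A, b != 0 /\ x = (FracField.tofrac a) / (FracField.tofrac b).
Proof.
elim/quotW: x => r.
have dn := denom_ratioP r.
exists (\n_r), (\d_r); split => //.
have nz : FracField.tofrac (\d_r) != 0 by rewrite tofrac_eq0.
apply: (canRL (mulfK nz)).
rewrite !piE /FracField.mulf /=.
apply/eqmodP; rewrite /= FracField.equivfE /=.
rewrite !numden_Ratio ?mulf_neq0 ?oner_eq0 //.
by rewrite !mulr1 mulrC.
Qed.

Lemma Fp_prod (p : nat) : prime p ->
  ('X^p - 'X : {poly 'F_p}) = \prod_(i < p) ('X - (i%:R : 'F_p)%:P).
Proof.
move=> pp.
have -> : ('X^p - 'X : {poly 'F_p}) = 'X^#|'F_p| - 'X by rewrite card_Fp.
rewrite finField_genPoly.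
have h1 : forall i : 'I_p, cast_ord (Fp_cast pp) ((i : nat)%:R : 'F_p) = i.
  move=> i; apply: val_inj => /=; rewrite val_Fp_nat // modn_small //.
have h2 : forall x : 'F_p, ((cast_ord (Fp_cast pp) x : nat)%:R : 'F_p) = x.
  by move=> x /=; rewrite natr_Zp.
rewrite (reindex (fun i : 'I_p => (i : nat)%:R : 'F_p)) //.
by exists (cast_ord (Fp_cast pp)) => x _; [apply: h1 | apply: h2].
Qed.

Definition Pint (p : nat) : {poly int} :=
  'X^p - 'X - \prod_(i < p) ('X - ((i : nat)%:R : int)%:P).

Lemma Pint_dvd p : prime p -> forall k, (p %| (Pint p)`_k)%Z.
Proof.
move=> pp k.
have H : map_poly ( *~%R (1 : 'F_p)) (Pint p) = 0.
  rewrite /Pint rmorphB rmorphB /= map_polyXn map_polyX rmorph_prod /=.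
  under eq_bigr do rewrite map_polyXsubC /= rmorph_nat.
  by rewrite Fp_prod // subrr.
rewrite (dvdz_pcharf (pchar_Fp pp)).
have := congr1 (fun q : {poly 'F_p} => q`_k) H.
by rewrite coef_map /= coef0 => ->.
Qed.

Lemma Pint_eval (F : fieldType) (p : nat) (x : F) : prime p ->
  exists q : {poly int},
    x ^+ p - x - \prod_(i < p) (x - (i : nat)%:R) =
    (map_poly ( *~%R (1 : F)) q).[x] * p%:R.
Proof.
move=> pp.
pose P := Pint p.
pose Q : {poly int} := \poly_(k < size P) (P`_k %/ (p : int))%Z.
have PQ : P = Q * (p : int)%:P.
  apply/polyP => i; rewrite coefMC coef_poly.
  case: ltnP => hi; first by rewrite divzK //; apply: Pint_dvd.
  by rewrite mul0r nth_default.
exists Q.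
have -> : x ^+ p - x - \prod_(i < p) (x - (i : nat)%:R) =
          (map_poly ( *~%R (1 : F)) P).[x].
  rewrite /P /Pint rmorphB rmorphB /= map_polyXn map_polyX rmorph_prod /=.
  rewrite !hornerE horner_prod; congr (_ - _).
  apply: eq_bigr => i _; by rewrite map_polyXsubC /= rmorph_nat !hornerE.
rewrite PQ rmorphM /= map_polyC /= hornerM hornerC.
by [].
Qed.

Section VR.
Variables (F : fieldType) (B : F -> Prop).

Definition vring := [/\ B 1, (forall x y, B x -> B y -> B (x - y)),
  (forall x y, B x -> B y -> B (x * y)) & (forall x, x != 0 -> B x \/ B x^-1)].

Definition mid z := B z /\ (z = 0 \/ ~ B z^-1).

Definition pvr (p : nat) := [/\ vring, B p%:R, ~ B (p%:R)^-1,
  (forall z, mid z -> B (z / p%:R)) &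
  (forall x, B x -> exists n : int, mid (x - n%:~R))].

Hypothesis hB : vring.

Lemma B1 : B 1. Proof. by case: hB. Qed.
Lemma BB x y : B x -> B y -> B (x - y). Proof. by case: hB => _ h *; apply: h. Qed.
Lemma BM x y : B x -> B y -> B (x * y). Proof. by case: hB => _ _ h *; apply: h. Qed.
Lemma BV x : x != 0 -> B x \/ B x^-1. Proof. by case: hB => _ _ _ h; apply: h. Qed.
Lemma B0 : B 0. Proof. by rewrite -(subrr 1); apply: BB; apply: B1. Qed.
Lemma BN x : B x -> B (- x). Proof. by move=> h; rewrite -sub0r; apply: BB => //; apply: B0. Qed.
Lemma BD x y : B x -> B y -> B (x + y).
Proof. by move=> hx hy; rewrite -[y]opprK; apply: BB => //; apply: BN. Qed.
Lemma Bn n : B n%:R.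
Proof. elim: n => [|n IH]; first exact: B0. by rewrite mulrS; apply: BD => //; apply: B1. Qed.
Lemma Bz (n : int) : B n%:~R.
Proof. by case: n => n; rewrite ?NegzE ?mulrNz; [apply: Bn | apply: BN; apply: Bn]. Qed.
Lemma BX x k : B x -> B (x ^+ k).
Proof. move=> h; elim: k => [|k IH]; first exact: B1. by rewrite exprS; apply: BM. Qed.
Lemma Bsum (I : Type) (r : seq I) (P : pred I) (f : I -> F) :
  (forall i, P i -> B (f i)) -> B (\sum_(i <- r | P i) f i).
Proof. move=> h; apply: (big_ind B) => //; [exact: B0 | exact: BD]. Qed.
Lemma Bprod (I : Type) (r : seq I) (P : pred I) (f : I -> F) :
  (forall i, P i -> B (f i)) -> B (\prod_(i <- r | P i) f i).
Proof. move=> h; apply: (big_ind B) => //; [exact: B1 | exact: BM]. Qed.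

Lemma mid_mul b z : B b -> mid z -> mid (b * z).
Proof.
move=> hb [hz hz']; split; first exact: BM.
case: hz' => [->|nz]; first by left; rewrite mulr0.
have [->|b0] := eqVneq b 0; first by left; rewrite mul0r.
have [->|z0] := eqVneq z 0; first by left; rewrite mulr0.
right=> h; apply: nz.
have -> : z^-1 = b * (b * z)^-1 by rewrite invfM mulrA divff // mul1r.
exact: BM.
Qed.

Lemma mid0 : mid 0. Proof. split; [exact: B0 | by left]. Qed.

Lemma midN z : mid z -> mid (- z).
Proof. by move=> h; rewrite -mulN1r; apply: mid_mul => //; apply: BN; apply: B1. Qed.

Lemma mid_add z1 z2 : mid z1 -> mid z2 -> mid (z1 + z2).
Proof.
move=> h1 h2.
have [->|n1] := eqVneq z1 0; first by rewrite add0r.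
have [->|n2] := eqVneq z2 0; first by rewrite addr0.
suff key : forall a b, a != 0 -> b != 0 -> mid a -> mid b -> B (a / b) -> mid (a + b).
  have : z1 / z2 != 0 by rewrite mulf_neq0 ?invr_eq0.
  move/BV => [h|h]; first exact: key.
  by rewrite addrC; apply: key => //; rewrite invfM invrK mulrC in h.
move=> a b na nb ha hb hab.
have -> : a + b = (a / b + 1) * b by rewrite mulrDl divfK // mul1r.
apply: mid_mul => //; apply: BD => //; exact: B1.
Qed.

Lemma midB z1 z2 : mid z1 -> mid z2 -> mid (z1 - z2).
Proof. by move=> h1 h2; apply: mid_add => //; apply: midN. Qed.

Lemma mid1 : ~ mid 1.
Proof. by case=> _ [/eqP|]; rewrite ?oner_eq0 // invr1; apply; apply: B1. Qed.

Lemma unit_of u : B u -> ~ mid u -> u != 0 /\ B u^-1.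
Proof.
move=> hu hm; have [u0|nz] := eqVneq u 0; first by case: hm; rewrite u0; exact: mid0.
split => //; apply: NNPP => h; apply: hm; split => //; by right.
Qed.

Lemma unit_sub1 z : mid z -> B (1 - z) /\ ~ mid (1 - z).
Proof.
move=> [hz hz']; split; first by apply: BB => //; apply: B1.
move=> h; apply: mid1; have -> : 1 = (1 - z) + z by rewrite subrK.
by apply: mid_add.
Qed.

Lemma mid_prod (I : eqType) (r : seq I) (f : I -> F) :
  (forall i, B (f i)) -> mid (\prod_(i <- r) f i) -> exists i, mid (f i).
Proof.
move=> hf; elim: r => [|i r IH]; first by rewrite big_nil => /mid1.
rewrite big_cons => h.
have [hi|hi] := classic (mid (f i)); first by exists i.
apply: IH; have [nz iB] := unit_of (hf i) hi.
have -> : \prod_(j <- r) f j = (f i)^-1 * (f i * \prod_(j <- r) f j).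
  by rewrite mulrA mulVf // mul1r.
exact: mid_mul.
Qed.

End VR.

Definition pb (P : Prop) : bool := if excluded_middle_informative P then true else false.
Lemma pbP P : reflect P (pb P).
Proof. by rewrite /pb; case: excluded_middle_informative => h; constructor. Qed.

Section Cons.
Variables (F : fieldType) (B : F -> Prop) (hB : vring B).

Definition equiv (x y : F) := B (x / y) /\ B (y / x).

Lemma equiv_refl (x : F) : x != 0 -> equiv x x.
Proof. by move=> h; rewrite /equiv divff //; split; apply: (B1 hB). Qed.
Lemma equiv_sym (x y : F) : equiv x y -> equiv y x.
Proof. by case. Qed.
Lemma equiv_trans (x y z : F) : y != 0 -> equiv x y -> equiv y z -> equiv x z.
Proof.
move=> ny [h1 h2] [h3 h4]; split.
  have -> : x / z = (x / y) * (y / z) by rewrite mulrA divfK.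
  by have := BM hB h1 h3.
have -> : z / x = (z / y) * (y / x) by rewrite mulrA divfK.
by have := BM hB h4 h2.
Qed.
Lemma equivM (a a' b : F) : b != 0 -> equiv a a' -> equiv (a * b) (a' * b).
Proof.
move=> nb [h1 h2]; split.
  by rewrite invfM mulrACA divff // mulr1.
by rewrite invfM mulrACA divff // mulr1.
Qed.

Definition nz (x : F) := if x == 0 then 1 else x.
Lemma nz_neq0 x : nz x != 0. Proof. by rewrite /nz; case: ifP => [_|/negbT]; rewrite ?oner_eq0. Qed.
Lemma nzE x : x != 0 -> nz x = x. Proof. by rewrite /nz => /negbTE ->. Qed.

Definition cpred (x : F) : pred F := fun y => pb (y != 0 /\ equiv x y).
Definition canon (x : F) := choose (cpred (nz x)) (nz x).

Lemma cpred_self x : cpred (nz x) (nz x).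
Proof. apply/pbP; split; [exact: nz_neq0 | apply: equiv_refl; exact: nz_neq0]. Qed.

Lemma canon_spec x : canon x != 0 /\ equiv (nz x) (canon x).
Proof. by have /pbP := chooseP (cpred_self x). Qed.

Lemma canon_eq x y : equiv (nz x) (nz y) -> canon x = canon y.
Proof.
move=> e.
have E : cpred (nz x) =1 cpred (nz y).
  move=> z; apply/pbP/pbP => -[nz0 h]; split => //.
    apply: equiv_trans (equiv_sym e) h; exact: nz_neq0.
  apply: equiv_trans e h; exact: nz_neq0.
rewrite /canon (eq_choose E); apply: choose_id; last exact: cpred_self.
by rewrite -E; apply: cpred_self.
Qed.

Lemma canon_inv x y : canon x = canon y -> equiv (nz x) (nz y).
Proof.
move=> e; have [n1 h1] := canon_spec x; have [n2 h2] := canon_spec y.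
rewrite e in h1 n1; exact: equiv_trans h1 (equiv_sym h2).
Qed.

Definition G := {x : F | pb (x != 0 /\ canon x = x)}.

Lemma gof_proof x : pb (canon x != 0 /\ canon (canon x) = canon x).
Proof.
have [n h] := canon_spec x; apply/pbP; split => //.
by apply: canon_eq; rewrite (nzE n); apply: equiv_sym.
Qed.

Definition gof (x : F) : G := exist _ (canon x) (gof_proof x).

Lemma G_neq0 (g : G) : val g != 0.
Proof. by case: g => x /= /pbP []. Qed.

Lemma gofK (g : G) : gof (val g) = g.
Proof. by apply: val_inj => /=; case: g => x /= /pbP []. Qed.

Lemma gof_eq (x y : F) : x != 0 -> y != 0 -> equiv x y -> gof x = gof y.
Proof. by move=> nx ny e; apply: val_inj => /=; apply: canon_eq; rewrite !nzE. Qed.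

Lemma gof_eqE (x y : F) : x != 0 -> y != 0 -> gof x = gof y -> equiv x y.
Proof. by move=> nx ny /(congr1 val) /= /canon_inv; rewrite !nzE. Qed.

Lemma val_gof (x : F) : x != 0 -> equiv x (val (gof x)).
Proof. by move=> nx /=; have [_] := canon_spec x; rewrite nzE. Qed.

Lemma gofM (x y : F) : x != 0 -> y != 0 -> gof (val (gof x) * y) = gof (x * y).
Proof.
move=> nx ny; apply: gof_eq; rewrite ?mulf_neq0 ?G_neq0 //.
exact/equivM/equiv_sym/val_gof.
Qed.

Definition gadd (g h : G) : G := gof (val g * val h).
Definition gzero : G := gof 1.
Definition gopp (g : G) : G := gof (val g)^-1.

Lemma gaddA : associative gadd.
Proof.
move=> g h k; rewrite /gadd gofM ?mulf_neq0 ?G_neq0 //.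
rewrite [val g * val (gof _)]mulrC gofM ?mulf_neq0 ?G_neq0 //.
by rewrite mulrC mulrA.
Qed.
Lemma gaddC : commutative gadd.
Proof. by move=> g h; rewrite /gadd mulrC. Qed.
Lemma gadd0 : left_id gzero gadd.
Proof. by move=> g; rewrite /gadd /gzero gofM ?oner_neq0 ?G_neq0 // mul1r gofK. Qed.
Lemma gaddN : left_inverse gzero gopp gadd.
Proof.
move=> g; rewrite /gadd /gopp gofM ?invr_eq0 ?G_neq0 //.
by rewrite mulVf ?G_neq0.
Qed.

HB.instance Definition _ := [Choice of G by <:].
HB.instance Definition _ := GRing.isZmodule.Build G gaddA gaddC gadd0 gaddN.



Definition gle (g h : G) : Prop := B (val h / val g).
Definition vv (x : F) : option G := if x == 0 then None else Some (gof x).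

Lemma G0E : (0 : G) = gof 1. Proof. by []. Qed.
Lemma GaddE (g h : G) : g + h = gof (val g * val h). Proof. by []. Qed.

Lemma divB_equiv (a a' b b' : F) : a != 0 -> b != 0 -> a' != 0 -> b' != 0 ->
  equiv a a' -> equiv b b' -> B (b / a) -> B (b' / a').
Proof.
move=> na nb na' nb' [h1 h2] [h3 h4] h.
have -> : b' / a' = (b' / b) * (b / a) * (a / a').
  by rewrite !mulrA divfK // divfK.
by have := BM hB (BM hB h4 h) h1.
Qed.

Lemma gle_gof (x y : F) : x != 0 -> y != 0 -> (gle (gof x) (gof y) <-> B (y / x)).
Proof.
move=> nx ny; rewrite /gle; split => h.
  apply: (divB_equiv _ _ _ _ (equiv_sym (val_gof nx)) (equiv_sym (val_gof ny)) h);
  by rewrite ?G_neq0.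
apply: (divB_equiv _ _ _ _ (val_gof nx) (val_gof ny) h); by rewrite ?G_neq0.
Qed.

Lemma vv0 (x : F) : x != 0 -> vv x = Some (gof x).
Proof. by rewrite /vv => /negbTE ->. Qed.

Lemma gle_ord : ordered_abelian_group gle.
Proof.
split.
- by move=> a; rewrite /gle divff ?G_neq0 //; apply: (B1 hB).
- move=> a b h1 h2; rewrite -(gofK a) -(gofK b); apply: gof_eq; rewrite ?G_neq0 //.
- move=> a b c h1 h2; rewrite /gle.
  have -> : val c / val a = (val c / val b) * (val b / val a) by rewrite mulrA divfK ?G_neq0.
  by have := BM hB h2 h1.
- move=> a b; have : val b / val a != 0 by rewrite mulf_neq0 ?invr_eq0 ?G_neq0.
  by move/(BV hB) => [h|h]; [left | right; rewrite invf_div in h].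
- move=> a b c h; rewrite !GaddE.
  apply/gle_gof; rewrite ?mulf_neq0 ?G_neq0 //.
  by rewrite invfM mulrACA divff ?G_neq0 // mulr1.
Qed.

Lemma vv_val : is_valuation gle vv.
Proof.
split.
- exact: gle_ord.
- by move=> x; rewrite /vv; case: eqP.
- move=> x y; rewrite /vv mulf_eq0.
  have [->|nx] := eqVneq x 0; first by [].
  have [->|ny] := eqVneq y 0; first by [].
  rewrite /=.
  congr Some; rewrite GaddE gofM ?G_neq0 //; apply: gof_eq; rewrite ?mulf_neq0 ?G_neq0 //.
  rewrite ![x * _]mulrC; apply: equivM => //; exact: val_gof.
- move=> x y.
  have vrefl : forall o, vle gle o o.
    by case=> // g; rewrite /vle; case: gle_ord => h *; apply: h.
  have [e|nxy] := eqVneq (x + y) 0.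
    have v0 : vv 0 = None by rewrite /vv eqxx.
    by rewrite e v0; left; case: (vv x).
  have [->|nx] := eqVneq x 0; first by rewrite add0r; right.
  have [->|ny] := eqVneq y 0; first by rewrite addr0; left.
  rewrite !vv0 //=.
  have : y / x != 0 by rewrite mulf_neq0 ?invr_eq0.
  move/(BV hB) => [h|h].
    left; apply/gle_gof => //.
    have -> : (x + y) / x = 1 + y / x by rewrite mulrDl divff.
    by apply: (BD hB) => //; apply: (B1 hB).
  right; apply/gle_gof => //; rewrite invf_div in h.
  have -> : (x + y) / y = x / y + 1 by rewrite mulrDl divff.
  by apply: (BD hB) => //; apply: (B1 hB).
- by move=> g; exists (val g); rewrite vv0 ?G_neq0 // gofK.
Qed.

Lemma val_ringE (x : F) : B x <-> val_ring gle vv x.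
Proof.
rewrite /val_ring /vv; case: eqP => [->|/eqP nx] /=.
  by split => // _; apply: (B0 hB).
rewrite G0E; split => h.
  by apply/gle_gof; rewrite ?oner_neq0 // divr1.
by move/gle_gof: h; rewrite divr1 oner_neq0; apply.
Qed.

Lemma cons_pval (p : nat) : pvr B p -> is_p_val_ring p B.
Proof.
case=> _ Bp nBp P2 P3.
have np : (p%:R : F) != 0.
  by apply/eqP => e; apply: nBp; rewrite e invr0; apply: (B0 hB).
exists G, gle, vv; split; last exact: val_ringE.
split.
- exact: vv_val.
- exists (gof p%:R); first exact: vv0.
  split.
    split; first by rewrite G0E; apply/gle_gof; rewrite ?oner_neq0 // divr1.
    rewrite G0E => /gof_eqE; rewrite oner_neq0 => /(_ isT np) [h _].
    by apply: nBp; rewrite -div1r.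
  move=> g [h1 h2]; rewrite -(gofK g); apply/gle_gof; rewrite ?G_neq0 //.
  apply: P2; move: h1; rewrite G0E -{1}(gofK g) => /gle_gof.
  rewrite oner_neq0 G_neq0 divr1 => /(_ isT isT) Bg; split => //; right => Bi.
  apply: h2; rewrite G0E -(gofK g); apply: gof_eq; rewrite ?oner_neq0 ?G_neq0 //.
  by split; rewrite ?div1r ?divr1.
- move=> x /val_ringE /P3 [n [Bz hz]]; exists n; split.
    by move/val_ringE: Bz.
  rewrite /vv; case: eqP => // /eqP nz0 [].
  move=> /canon_inv; rewrite nzE ?oner_neq0 // nzE // => -[h _].
  by rewrite div1r in h; case: hz => // /eqP; rewrite (negbTE nz0).
Qed.

End Cons.

Section ValToPvr.
Variables (G : zmodType) (le : G -> G -> Prop) (F : fieldType) (p : nat)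
  (v : F -> option G).
Hypothesis hv : is_p_valuation le p v.

Let hval : is_valuation le v. Proof. by case: hv. Qed.
Let hord : ordered_abelian_group le. Proof. by case: hval. Qed.
Let gleR a : le a a. Proof. by case: hord => h *; apply: h. Qed.
Let gleA a b : le a b -> le b a -> a = b. Proof. by case: hord => _ h *; apply: h. Qed.
Let gleTot a b : le a b \/ le b a. Proof. by case: hord => _ _ _ h _; apply: h. Qed.
Let gleT a b c : le a b -> le b c -> le a c. Proof. move=> h1 h2; case: hord => _ _ h _ _; exact: h h1 h2. Qed.
Let gleD a b c : le a b -> le (a + c) (b + c). Proof. by case: hord => _ _ _ _ h; apply: h. Qed.
Let vNone x : v x = None <-> x = 0. Proof. by case: hval => _ h. Qed.
Let vM x y : v (x * y) = vadd (v x) (v y). Proof. by case: hval => _ _ h. Qed.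
Let vD x y : vle le (v x) (v (x + y)) \/ vle le (v y) (v (x + y)). Proof. by case: hval => _ _ _ h. Qed.

Let le0D a b : le 0 a -> le 0 b -> le 0 (a + b).
Proof. move=> ha hb; apply: gleT hb _; have := gleD b ha; by rewrite add0r. Qed.

Let vSome x : x != 0 -> exists a, v x = Some a.
Proof.
move=> nx; case e: (v x) => [a|]; first by exists a.
by move/vNone: e => e; rewrite e eqxx in nx.
Qed.

Let v1 : v 1 = Some 0.
Proof.
have [a ha] := vSome (oner_neq0 F).
have := vM 1 1; rewrite mulr1 ha /= => -[] /esym e.
by congr Some; apply: (addrI a); rewrite e addr0.
Qed.

Let vV x a : v x = Some a -> v x^-1 = Some (- a).
Proof.
move=> ha; have nx : x != 0 by apply/eqP => e; move/vNone: e; rewrite ha.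
have [b hb] := vSome (invr_neq0 nx).
have := vM x x^-1; rewrite divff // v1 ha hb /= => -[] e.
congr Some; by apply: (addrI a); rewrite -e subrr.
Qed.

Let vm1 : v (-1) = Some 0.
Proof.
have [c hc] : exists c, v (-1) = Some c.
  by apply: vSome; rewrite oppr_eq0 oner_neq0.
have := vM (-1) (-1); rewrite mulrNN mulr1 v1 hc /= => -[] e.
congr Some.
case: (gleTot 0 c) => h.
  apply: gleA => //; have := gleD c h; by rewrite add0r -e.
apply: gleA => //; have := gleD c h; by rewrite add0r -e.
Qed.

Let vN x : v (- x) = v x.
Proof. rewrite -mulN1r vM vm1 /=; case: (v x) => //= a; by rewrite add0r. Qed.

Let vgleT o1 o2 o3 : vle le o1 o2 -> vle le o2 o3 -> vle le o1 o3.
Proof.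
case: o3 => [c|]; last by case: o1.
case: o2 => [b|] //; case: o1 => [a|] //=; exact: gleT.
Qed.

Local Notation R := (val_ring le v).

Let R_sub : vring R.
Proof.
split.
- by rewrite /R /val_ring v1 /=.
- move=> x y hx hy; rewrite /R /val_ring.
  have hy' : vle le (Some 0) (v (- y)) by rewrite vN.
  by case: (vD x (- y)) => h; [apply: vgleT hx h | apply: vgleT hy' h].
- move=> x y; rewrite /R /val_ring vM.
  case: (v x) => [a|] //; case: (v y) => [b|] //=; exact: le0D.
- move=> x nx; have [a ha] := vSome nx; rewrite /R /val_ring (vV ha) ha /=.
  case: (gleTot 0 a) => h; [by left | right].
  by have := gleD (- a) h; rewrite subrr add0r.
Qed.

Lemma val_pvr : pvr R p.
Proof.
case: hv => _ [g0 hp [[g0pos g0n] g0min]] hres.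
have np : (p%:R : F) != 0 by apply/eqP => e; move/vNone: e; rewrite hp.
split => //.
- by rewrite /R /val_ring hp.
- rewrite /R /val_ring (vV hp) /= => h; apply: g0n.
  apply: gleA => //; by have := gleD g0 h; rewrite add0r addNr.
- move=> z [hz hz']; have [->|nz] := eqVneq z 0; first by rewrite mul0r /R /val_ring (proj2 (vNone 0)).
  have [a ha] := vSome nz.
  rewrite /R /val_ring vM ha (vV hp) /=.
  have a0 : glt le 0 a.
    split; first by move: hz; rewrite /R /val_ring ha.
    move=> e; case: hz' => [e'|]; first by rewrite e' eqxx in nz.
    by apply; rewrite /R /val_ring (vV ha) -e oppr0 /=.
  have := gleD (- g0) (g0min _ a0); by rewrite subrr.
- move=> x /hres [n [h1 h2]]; exists n; split => //.
  have [e|nz] := eqVneq (x - n%:~R) 0; first by left.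
  right=> hi; apply: h2.
  have [a ha] := vSome nz; rewrite ha; congr Some.
  move: h1 hi; rewrite /R /val_ring (vV ha) ha /= => h1 h2.
  apply: gleA => //; by have := gleD a h2; rewrite addNr add0r.
Qed.

End ValToPvr.

Lemma pvr_ext (F : fieldType) (B B' : F -> Prop) p :
  (forall x, B x <-> B' x) -> pvr B' p -> pvr B p.
Proof.
move=> e [[h1 h2 h3 h4] h5 h6 h7 h8].
have em : forall z, mid B z <-> mid B' z.
  by move=> z; rewrite /mid !e.
split.
- split; first by apply/e.
  + by move=> x y /e hx /e hy; apply/e; apply: h2.
  + by move=> x y /e hx /e hy; apply/e; apply: h3.
  + by move=> x /h4 [/e|/e]; [left|right].
- by apply/e.
- by move/e.
- by move=> z /em /h7 /e.
- by move=> x /e /h8 [n /em hn]; exists n.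
Qed.

Lemma pval_pvr (F : fieldType) (B : F -> Prop) p :
  is_p_val_ring p B -> pvr B p.
Proof.
move=> [G [le [v [hv e]]]]; apply: (pvr_ext e); exact: val_pvr hv.
Qed.

Lemma fermat_int (p : nat) (n : int) : prime p -> (p %| n ^+ p - n)%Z.
Proof.
move=> pp; rewrite (dvdz_pcharf (pchar_Fp pp)) rmorphB rmorphXn /=.
have -> : forall z : 'F_p, z ^+ p = z.
  by move=> z; have e := card_Fp pp; have := expf_card z; rewrite e.
by rewrite subrr.
Qed.

Section Gamma.
Variables (F : fieldType) (B : F -> Prop) (p : nat).
Hypothesis hpv : pvr B p.
Hypothesis pp : prime p.

Let hB : vring B. Proof. by case: hpv. Qed.
Let Bp : B p%:R. Proof. by case: hpv. Qed.
Let nBp : ~ B (p%:R)^-1. Proof. by case: hpv. Qed.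
Let P2 z : mid B z -> B (z / p%:R). Proof. by case: hpv => _ _ _ h _; apply: h. Qed.
Let P3 x : B x -> exists n : int, mid B (x - n%:~R). Proof. by case: hpv => _ _ _ _ h; apply: h. Qed.

Let np : (p%:R : F) != 0.
Proof. by apply/eqP => e; apply: nBp; rewrite e invr0; apply: (B0 hB). Qed.

Let midp : mid B p%:R.
Proof. split => //; by right. Qed.

Lemma mid_frob x : B x -> mid B (x ^+ p - x).
Proof.
move=> Bx; have [n hn] := P3 Bx.
have [k hk] : exists k : int, n ^+ p - n = k * p.
  by exists ((n ^+ p - n) %/ p)%Z; rewrite divzK //; apply: fermat_int.
have -> : x ^+ p - x = (x - n%:~R) * \sum_(i < p) x ^+ (p.-1 - i) * (n%:~R) ^+ i
    - (x - n%:~R) + (k%:~R * p%:R).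
  have e1 : ((n ^+ p - n)%:~R : F) = k%:~R * p%:R by rewrite hk intrM.
  rewrite rmorphB rmorphXn /= in e1.
  by rewrite -e1 -subrXX; ring.
apply: (mid_add hB); last by apply: (mid_mul hB) => //; apply: (Bz hB).
apply: (midB hB) => //; rewrite mulrC; apply: (mid_mul hB) => //.
by apply: (Bsum hB) => i _; apply: (BM hB); apply: (BX hB) => //; apply: (Bz hB).
Qed.


Lemma gamma_pvr x : let y := x ^+ p - x in
  y ^+ 2 - 1 != 0 /\ B (y / (p%:R * (y ^+ 2 - 1))).
Proof.
move=> y.
have [Bx|nBx] := classic (B x).
  have hy : mid B y := mid_frob Bx.
  have Byp : B (y / p%:R) := P2 hy.
  have [B1y nm] := unit_sub1 hB (mid_mul hB (proj1 hy) hy).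
  have [nz Bi] := unit_of hB B1y nm.
  have e : y ^+ 2 - 1 = - (1 - y * y) by rewrite expr2 opprB.
  rewrite e oppr_eq0; split => //.
  have -> : y / (p%:R * - (1 - y * y)) = (y / p%:R) * - (1 - y * y)^-1.
    by field; rewrite nz np oppr_eq0 nz.
  by apply: (BM hB) => //; apply: (BN hB).
have nx : x != 0 by apply/eqP => e; apply: nBx; rewrite e; apply: (B0 hB).
pose w := x^-1.
have nw : w != 0 by rewrite invr_eq0.
have Bw : B w by case: (BV hB nx).
have mw : mid B w by split => //; right; rewrite /w invrK.
have [q hq] : exists q, p = q.+2.
  by exists p.-2; have := prime_gt1 pp; lia.
pose V := w ^+ q.
have nV : V != 0 by rewrite expf_neq0.
have BV' : B V by apply: (BX hB).
have ey : y = (V * w * w)^-1 - w^-1.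
  by rewrite /y /V /w hq -!exprSr exprVn !invrK.
pose t := (1 - V * w) ^+ 2 - V ^+ 2 * w ^+ 4.
pose z := (2%:R * V - V ^+ 2 * w + V ^+ 2 * w ^+ 3) * w.
have mz : mid B z.
  apply: (mid_mul hB) => //.
  apply: (BD hB); first apply: (BB hB).
  - by apply: (BM hB) => //; apply: (Bn hB).
  - by apply: (BM hB); [apply: (BX hB) | ].
  - by apply: (BM hB); apply: (BX hB).
have tz : t = 1 - z by rewrite /t /z; ring.
have [Bt nmt] := unit_sub1 hB mz.
rewrite -tz in Bt nmt.
have [nt Bti] := unit_of hB Bt nmt.
have e2 : y ^+ 2 - 1 = t / (V ^+ 2 * w ^+ 4).
  by rewrite ey /t; field; rewrite nV nw.
split; first by rewrite e2 mulf_neq0 // invr_eq0 mulf_neq0 // expf_neq0.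
have -> : y / (p%:R * (y ^+ 2 - 1)) = (1 - V * w) * V * w * (w / p%:R) * t^-1.
  rewrite e2 ey; field; by rewrite nV nw np nt.
apply: (BM hB) => //; apply: (BM hB); last exact: P2.
apply: (BM hB) => //; apply: (BM hB) => //.
apply: (BB hB); [apply: (B1 hB) | apply: (BM hB)] => //.
Qed.

End Gamma.

Lemma pvr_of_gamma (F : fieldType) (B : F -> Prop) (p : nat) :
  prime p -> vring B -> B p%:R -> ~ B (p%:R)^-1 ->
  (forall x : F, let y := x ^+ p - x in
     y ^+ 2 - 1 != 0 /\ B (y / (p%:R * (y ^+ 2 - 1)))) ->
  pvr B p.
Proof.
move=> pp hB Bp nBp hg.
have np : (p%:R : F) != 0.
  by apply/eqP => e; apply: nBp; rewrite e invr0; apply: (B0 hB).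
have midp : mid B p%:R by split => //; right.
have K : forall x, B x -> B ((x ^+ p - x) / p%:R).
  move=> x Bx; have [nz h] := hg x.
  set y := x ^+ p - x in nz h *.
  have -> : y / p%:R = (y / (p%:R * (y ^+ 2 - 1))) * (y ^+ 2 - 1).
    by field; rewrite nz np.
  apply: (BM hB) => //; apply: (BB hB); last exact: (B1 hB).
  by apply: (BX hB); apply: (BB hB) => //; apply: (BX hB).
have [q hq] : exists q, p = q.+2.
  by exists p.-2; have := prime_gt1 pp; lia.
split => //.
- move=> z mz; have [Bz _] := mz.
  have mzq : mid B (z ^+ q.+1) by rewrite exprSr; apply: (mid_mul hB) => //; apply: (BX hB).
  have [Bu nmu] := unit_sub1 hB mzq.
  have [nu Bui] := unit_of hB Bu nmu.
  have -> : z / p%:R = - ((z ^+ p - z) / p%:R) * (1 - z ^+ q.+1)^-1.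
    have ez : z ^+ p = z * z ^+ q.+1 by rewrite hq exprS.
    by rewrite ez; field; rewrite np nu.
  by apply: (BM hB) => //; apply: (BN hB); apply: K.
- move=> x Bx.
  have [Q hQ] := Pint_eval x pp.
  have BQ : B (map_poly ( *~%R (1 : F)) Q).[x].
    rewrite horner_coef; apply: (Bsum hB) => i _; apply: (BM hB).
      by rewrite coef_map /=; apply: (Bz hB).
    exact: (BX hB).
  have mP : mid B (\prod_(i < p) (x - (i : nat)%:R)).
    have -> : \prod_(i < p) (x - (i : nat)%:R) =
        ((x ^+ p - x) / p%:R - (map_poly ( *~%R (1 : F)) Q).[x]) * p%:R.
      rewrite mulrBl -hQ divfK //; ring.
    apply: (mid_mul hB) => //; apply: (BB hB) => //; exact: K.
  have [i hi] := mid_prod hB (fun i : 'I_p => BB hB Bx (Bn hB i)) mP.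
  by exists (i : nat).
Qed.

Lemma DN_field (K : fieldType) (P X Y Xp Yp : K) : Y != 0 -> Yp != 0 ->
  P * ((Xp * Y - Yp * X) * (Xp * Y - Yp * X) - Yp * Y * (Yp * Y)) =
  P * (Yp * Y) ^+ 2 * ((Xp / Yp - X / Y) ^+ 2 - 1) /\
  (Xp * Y - Yp * X) * (Yp * Y) = (Yp * Y) ^+ 2 * (Xp / Yp - X / Y).
Proof. move=> nY nYp; split; field; by rewrite nYp nY. Qed.

Lemma cancel_mid (K : fieldType) (Z y P w : K) : Z != 0 ->
  Z * y / (P * Z * w) = y / (P * w).
Proof.
move=> nZ; have [->|nP] := eqVneq P 0; first by rewrite !(mul0r, invr0, mulr0).
have [->|nw] := eqVneq w 0; first by rewrite !(mulr0, invr0).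
by field; rewrite nZ nP nw.
Qed.

Section Div.
Variables (A : idomainType) (p : nat).
Hypothesis pp : prime p.
Hypothesis pA : (p%:R : A) != 0.
Local Notation F := {fraction A}.
Local Notation tf := (@FracField.tofrac A).

Lemma tf_nat n : tf n%:R = n%:R.
Proof. exact: rmorph_nat. Qed.

Lemma tf_neq0 a : a != 0 -> tf a != 0.
Proof. by rewrite tofrac_eq0. Qed.

Lemma DN_ident (a b : A) : b != 0 ->
  let x := tf a / tf b in let y := x ^+ p - x in
  tf (p%:R * ((a ^+ p * b - b ^+ p * a) ^+ 2 - (b ^+ p.+1) ^+ 2)) =
    p%:R * (tf b ^+ p.+1) ^+ 2 * (y ^+ 2 - 1) /\
  tf ((a ^+ p * b - b ^+ p * a) * b ^+ p.+1) = (tf b ^+ p.+1) ^+ 2 * y.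
Proof.
move=> nb x y.
have nB := tf_neq0 nb.
have nBp : tf b ^+ p != 0 by rewrite expf_neq0.
rewrite /y /x expr_div_n.
rewrite !(rmorphM, rmorphB, rmorphXn) /= tf_nat exprSr.
exact: DN_field.
Qed.


Lemma divq_cancel (a b c : A) : a != 0 -> c != 0 ->
  tf (b * c) / tf (a * c) = tf b / tf a.
Proof.
move=> na nc; rewrite !rmorphM /= invfM mulrACA divff ?mulr1 //.
exact: tf_neq0.
Qed.

Lemma pvr_good (B : F -> Prop) : pvr B p -> good_p_div p (div_of_ring B).
Proof.
move=> hpv; have [hB Bp nBp _ _] := hpv.
have nz := tf_neq0.
split.
- split.
  + split.
    * move=> a; have [->|na] := eqVneq a 0; first by left.
      by right; split; [apply/eqP | rewrite divff ?nz //; apply: (B1 hB)].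
    * move=> a b c [[a0 b0]|[na hab]] [[b0' c0]|[nb hbc]].
      - by left.
      - by rewrite b0 in nb.
      - by right; split => //; rewrite c0 rmorph0 mul0r; apply: (B0 hB).
      - right; split => //.
        have -> : tf c / tf a = (tf c / tf b) * (tf b / tf a).
          by rewrite mulrA divfK // nz //; apply/eqP.
        exact: (BM hB).
    * move=> a b c [[a0 b0]|[na hab]] [[a0' c0]|[na' hac]].
      - by left; rewrite b0 c0 subrr.
      - by [].
      - by [].
      - right; split => //; rewrite rmorphB mulrBl; exact: (BB hB).
    * move=> a b c [[a0 b0]|[na hab]].
        by left; rewrite a0 b0 !mul0r.
      have [c0|nc] := eqVneq c 0; first by left; rewrite c0 !mulr0.
      right; split; first by apply/eqP; rewrite mulf_neq0 //; apply/eqP.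
      by rewrite divq_cancel //; apply/eqP.
    * by case=> -[] // _ /eqP; rewrite oner_eq0.
  + move=> a h0 [[pa0 _]|[npa h]].
      apply: h0; left; split => //.
      by move/eqP: pa0; rewrite mulf_eq0 (negbTE pA) /= => /eqP.
    apply: nBp; have na : a != 0 by apply/eqP => e; apply: h0; left.
    by rewrite rmorphM /= invfM mulrCA divff ?mulr1 ?nz // tf_nat in h.
  + move=> a b; have [->|nb] := eqVneq b 0.
      left; have p0 : (0 < p)%N by apply: prime_gt0.
      by rewrite !expr0n /= !eqn0Ngt p0 /= !(mulr0, mul0r, subrr, subr0, expr0n).
    have [eD eN] := DN_ident a nb.
    have [ny hg] := gamma_pvr hpv pp (tf a / tf b).
    set y := (tf a / tf b) ^+ p - tf a / tf b in eD eN ny hg.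
    have nB : tf b != 0 by apply: nz.
    have nbp : tf b ^+ p.+1 != 0 by rewrite expf_neq0.
    right; split.
      apply/eqP; rewrite -tofrac_eq0 eD !mulf_neq0 ?expf_neq0 //.
      by rewrite -(tf_nat p) nz.
    rewrite eD eN.
    rewrite cancel_mid ?expf_neq0 //.
- move=> a b; have [->|na] := eqVneq a 0.
    have [->|nb] := eqVneq b 0; first by left; left.
    by right; right; split; [apply/eqP | rewrite rmorph0 mul0r; apply: (B0 hB)].
  have [->|nb] := eqVneq b 0.
    by left; right; split; [apply/eqP | rewrite rmorph0 mul0r; apply: (B0 hB)].
  have : tf b / tf a != 0 by rewrite mulf_neq0 ?invr_eq0 ?nz.
  case/(BV hB) => h; [left | right]; right; split; try by apply/eqP.
  - exact: h.
  - by move: h; rewrite invf_div.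
- move=> a b c h0 [[ac0 bc0]|[nac h]].
    have nc : c != 0 by apply/eqP => e; apply: h0; left; rewrite e.
    left; split.
      by move/eqP: ac0; rewrite mulf_eq0 (negbTE nc) orbF => /eqP.
    by move/eqP: bc0; rewrite mulf_eq0 (negbTE nc) orbF => /eqP.
  have nc : c != 0 by apply/eqP => e; apply: h0; left; rewrite e.
  have na : a != 0 by apply/eqP => e; apply: nac; rewrite e mul0r.
  right; split; first by apply/eqP.
  by rewrite divq_cancel in h.
- move=> a; split; last by move=> ->; left.
  by case=> -[] // /eqP; rewrite eqxx.
Qed.


Section Good.
Variable dv : A -> A -> Prop.
Hypothesis hg : good_p_div p dv.

Let hd : is_divisibility dv. Proof. by case: hg => -[]. Qed.
Let d_refl a : dv a a. Proof. by case: hd => h *; apply: h. Qed.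
Let d_trans a b c : dv a b -> dv b c -> dv a c.
Proof. move=> h1 h2; case: hd => _ h _ _ _; exact: h h1 h2. Qed.
Let d_sub a b c : dv a b -> dv a c -> dv a (b - c).
Proof. move=> h1 h2; case: hd => _ _ h _ _; exact: h h1 h2. Qed.
Let d_mul a b c : dv a b -> dv (a * c) (b * c).
Proof. move=> h1; case: hd => _ _ _ h _; exact: h h1. Qed.
Let d01 : ~ dv 0 1. Proof. by case: hd. Qed.
Let d6 a : ~ dv 0 a -> ~ dv (p%:R * a) a. Proof. by case: hg => -[] _ h *; apply: h. Qed.
Let d7 a b : dv (p%:R * ((a ^+ p * b - b ^+ p * a) ^+ 2 - (b ^+ p.+1) ^+ 2))
           ((a ^+ p * b - b ^+ p * a) * b ^+ p.+1).
Proof. by case: hg => -[] _ _ h *; apply: h. Qed.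
Let d_tot a b : dv a b \/ dv b a. Proof. by case: hg => _ h *; apply: h. Qed.
Let d_canc a b c : ~ dv 0 c -> dv (a * c) (b * c) -> dv a b.
Proof. by case: hg => _ _ h *; apply: (h _ _ c). Qed.
Let d_supp a : dv 0 a <-> a = 0. Proof. by case: hg => _ _ _ h; apply: h. Qed.

Let d_0 a : dv a 0. Proof. by rewrite -(subrr a); apply: d_sub. Qed.
Let nd0 c : c != 0 -> ~ dv 0 c. Proof. by move=> nc /d_supp e; rewrite e eqxx in nc. Qed.

Local Notation BD := (ring_of_div dv).

Lemma keyB a b : a != 0 -> BD (tf b / tf a) <-> dv a b.
Proof.
move=> na; split; last by move=> h; left; exists a, b; split => //; apply/eqP.
case=> [[a' [b' [na' h' e]]]|e0].
  have e2 : b * a' = b' * a.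
    apply/eqP; rewrite -tofrac_eq !rmorphM /=; apply/eqP.
    have ha : tf a != 0 by apply: tf_neq0.
    have ha' : tf a' != 0 by apply: tf_neq0; apply/eqP.
    by rewrite -[tf b](divfK ha) e mulrAC divfK.
  apply: (d_canc (c := a')); first by apply: nd0; apply/eqP.
  by rewrite e2 mulrC; apply: d_mul.
move/eqP: e0; rewrite mulf_eq0 invr_eq0 (negbTE (tf_neq0 na)) orbF tofrac_eq0.
by move/eqP => ->.
Qed.

Lemma BD_repr (x : F) : exists a b : A, [/\ a != 0, x = tf b / tf a & (BD x <-> dv a b)].
Proof.
have [b [a [na ->]]] := frac_repr x.
by exists a, b; split => //; apply: keyB.
Qed.

Let d1n n : dv 1 n%:R.
Proof.
elim: n => [|n IH]; first exact: d_0.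
have -> : (n.+1%:R : A) = n%:R - (0 - 1) by rewrite sub0r opprK mulrSr.
by apply: d_sub => //; apply: d_sub.
Qed.

Lemma good_pvr : pvr BD p.
Proof.
have hB : vring BD.
  split.
  - by rewrite -(divr1 1) -tofrac1; apply/keyB; rewrite ?oner_neq0.
  - move=> x y; have [a [b [na -> ->]]] := BD_repr x.
    have [c [d [nc -> ->]]] := BD_repr y => hab hcd.
    have -> : tf b / tf a - tf d / tf c = tf (b * c - d * a) / tf (a * c).
      by rewrite rmorphB mulrBl divq_cancel // [a * c]mulrC divq_cancel.
    apply/keyB; first by rewrite mulf_neq0.
    apply: d_sub; first by apply: d_mul.
    by rewrite mulrC; apply: d_mul.
  - move=> x y; have [a [b [na -> ->]]] := BD_repr x.
    have [c [d [nc -> ->]]] := BD_repr y => hab hcd.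
    have -> : tf b / tf a * (tf d / tf c) = tf (b * d) / tf (a * c).
      by rewrite !rmorphM /= invfM mulrACA.
    apply/keyB; first by rewrite mulf_neq0.
    apply: d_trans (d_mul c hab) _.
    by rewrite [b * c]mulrC [b * d]mulrC; apply: d_mul.
  - move=> x; have [a [b [na -> _]]] := BD_repr x => nx.
    have nb : b != 0.
      by apply/eqP => e; move: nx; rewrite e rmorph0 mul0r eqxx.
    case: (d_tot a b) => h; [left | right]; first by apply/keyB.
    by rewrite invf_div; apply/keyB.
have pA' : tf p%:R != 0 by apply: tf_neq0.
apply: pvr_of_gamma => //.
- by rewrite -tf_nat -(divr1 (tf _)) -tofrac1; apply/keyB; rewrite ?oner_neq0.
- rewrite -tf_nat -div1r -tofrac1 => /(keyB 1 pA).
  by move=> h; apply: (d6 d01); rewrite mulr1.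
- move=> x; have [a [b [nb -> _]]] := BD_repr x.
  have [eD eN] := DN_ident b nb.
  set y := (tf b / tf a) ^+ p - tf b / tf a in eD eN *.
  have nB : tf a != 0 by apply: tf_neq0.
  have nbp : tf a ^+ p.+1 != 0 by rewrite expf_neq0.
  have hD := d7 b a.
  set D := p%:R * _ in hD eD; set N := _ * a ^+ p.+1 in hD eN.
  have nD : D != 0.
    apply/eqP => D0; move: hD; rewrite D0 => /d_supp N0.
    move: eN eD; rewrite N0 D0 rmorph0 => /esym /eqP.
    rewrite mulf_eq0 expf_eq0 (negbTE nbp) andbF /= => /eqP y0.
    rewrite y0 expr0n /= sub0r mulrN1 => /eqP; rewrite eq_sym oppr_eq0.
    have pF : (p%:R : F) != 0 by rewrite -tf_nat.
    by apply/negP; rewrite !mulf_neq0 ?expf_neq0.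
  move=> y0; rewrite /y0; have ny : y ^+ 2 - 1 != 0.
    by move: nD; rewrite -tofrac_eq0 eD !mulf_eq0 negb_or => /andP [].
  split => //.
  have := (proj2 (keyB N nD) hD); rewrite eD eN cancel_mid ?expf_neq0 //.
Qed.

End Good.

End Div.

Unset Implicit Arguments.

Theorem theorem2p6 (p : nat) (A : idomainType) :
  prime p ->
  (forall n : nat, (0 < n)%N -> (n%:R : A) \is a GRing.unit) ->
  [/\ (forall B : {fraction A} -> Prop,
         is_p_val_ring p B -> good_p_div p (div_of_ring B)),
      (forall dv : A -> A -> Prop,
         good_p_div p dv -> is_p_val_ring p (ring_of_div dv)),
      (forall B : {fraction A} -> Prop,
         is_p_val_ring p B ->
         forall x, ring_of_div (div_of_ring B) x <-> B x)
    & (forall dv : A -> A -> Prop,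
         good_p_div p dv ->
         forall a b, div_of_ring (ring_of_div dv) a b <-> dv a b)].
Proof.
move=> pp hu.
have pA : (p%:R : A) != 0.
  by apply: contraTneq (hu p (prime_gt0 pp)) => ->; rewrite unitr0.
split.
- by move=> B /pval_pvr hpv; apply: pvr_good.
- move=> dv hg; have hpv := good_pvr pp pA hg.
  by case: (hpv) => hB _ _ _ _; apply: cons_pval hpv.
- move=> B /pval_pvr [hB _ _ _ _] x; split.
    case=> [[a [b [na hab ->]]]|->]; last exact: (B0 hB).
    by case: hab => [[a0 _]|[_ h]].
  move=> Bx; have [b [a [na ex]]] := frac_repr x.
  left; exists a, b; split => //; first by apply/eqP.
  by right; split; [apply/eqP | rewrite -ex].
- move=> dv hg a b; have [_ _ _ hs] := hg; split.
    case=> [[-> ->]|[na h]]; first by apply/hs.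
    by apply/(keyB hg b (a:=a)) => //; apply/eqP.
  have [a0|na] := eqVneq a 0.
    by move: a0 => -> /hs ->; left.
  move=> h; right; split; first by apply/eqP.
  by left; exists a, b; split => //; apply/eqP.
Qed.
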